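(* Let $1\le h\le d-3$, $m\in U$, and let $u=(u_{\alpha,\beta})_{\alpha+\beta\le h}$ be an element of $R_h$ at $m$, with $v^{(k)}:=u_{0,k}=(v^{(k)}_j)_{0\le j\le d-3}$ and $\tilde v^{(k)}:=(v^{(k)}_j)_{0\le j\le d-3-k}$. Then $$v^{(h)}=(-1)^hK^h\,u_{h,0}+\sum_{k=0}^{h-1}(-1)^kK^{k}\,({}_0J)\,\langle M,u\rangle_{k,h-1-k},$$ and $v^{(h)}$ is entirely determined by $\tilde v^{(h)}$ together with the $\tilde v^{(k)}$ for $k<h$.
   Context: Let $d\ge 3$, $U\subset\mathbb{C}^2$ open with coordinates $(x,y)$, and let $M$ be the $(d-1)\times(d-2)$ matrix of holomorphic functions on $U$ defined as follows. Let $F(x,y,p)=\sum_{i=0}^d a_i(x,y)p^{d-i}$, $a_i$ holomorphic, $a_0\equiv1$, with $F=\prod_{i=1}^d(p-p_i(x,y))$, the $p_i$ holomorphic and pairwise distinct at every point. A polynomial $P=\sum_{i=0}^kg_ip^i$ is identified with $(g_0,\dots,g_k)^T$; $M(P)$ is the $(h+k+1)\times(h+1)$ multiplication matrix with $0$-based entry $(i,j)$ equal to $g_{i-j}$ if $0\le i-j\le k$, else $0$. Put $K_F=F'_x+pF'_y$, $H=K_FF''_{pp}-(K_F)'_pF'_p$, $L=K_FF'_p$; take $M(F)$ of size $(3d-3)\times(2d-3)$, $M((F'_p)^2)$ of size $(3d-3)\times(d-1)$, $M(L),M(H)$ of size $(3d-3)\times(d-2)$. For a matrix $X$ with $3d-3$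 rows, $X^+$ (resp. $X^-$) is the submatrix of its first $d$ (resp. last $2d-3$) rows. $N$ is the $(d-2)\times(d-2)$ matrix with only nonzero entries $N_{j,j+1}=j$ ($1\le j\le d-3$, 1-based). $B=M^+((F'_p)^2)-M^+(F)(M^-(F))^{-1}M^-((F'_p)^2)$ (rank $d-1$), $E=(M^+(H)-M^+(L)N)-M^+(F)(M^-(F))^{-1}(M^-(H)-M^-(L)N)$, $T$ a left inverse of $B$, and $M=-TE$. $I_0$ (resp. $I^0$) is the $(d-1)\times(d-2)$ matrix formed by $\mathrm{Id}_{d-2}$ followed by (resp. preceded by) a zero row. $({}_0J)$ is the $(d-2)\times(d-1)$ matrix obtained by adding a column of zeros to the left of $\mathrm{Id}_{d-2}$, and $K:=({}_0J)I_0$ (so $K(w_0,\dots,w_{d-3})=(w_1,\dots,w_{d-3},0)$). $M'_{a,b}=\partial^{a+b}M/\partial x^a\partial y^b$, and for $\alpha+\beta\le h-1$, $\langle M,u\rangle_{\alpha,\beta}:=\sum_{\gamma=0}^\alpha\sum_{\delta=0}^\beta\binom{\alpha}{\gamma}\binom{\beta}{\delta}M'_{\alpha-\gamma,\beta-\delta}(m)u_{\gamma,\delta}$. $R_h$ (formal abelian relations of order $h$): its fiber at $m\in U$ is the set of families $(u_{\alpha,\beta})_{\alpha+\beta\le h}$ of vectors in $\mathbb{C}^{d-2}$ such that $I_0u_{\alpha+1,\beta}+I^0u_{\alpha,\beta+1}=\langle M,u\rangle_{\alpha,\beta}$ for all $\alpha+\beta\le h-1$. *)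

(* Defs.v *)
From mathcomp Require Import all_boot all_order all_algebra.
From mathcomp Require Import all_classical all_reals all_analysis.
From mathcomp Require Import complex.
Import Order.TTheory GRing.Theory Num.Theory.
Import numFieldNormedType.Exports.

Set Implicit Arguments.
Unset Strict Implicit.
Unset Printing Implicit Defensive.

Local Open Scope ring_scope.
Local Open Scope complex_scope.

Notation Cplx R := ((R[i])^o).
Notation C2pt R := (Cplx R * Cplx R)%type.

Section Setup.
Variable R : realType.
Local Notation C := (Cplx R).
Local Notation pt := (C2pt R).

Definition holomorphic_on (U : set pt) (f : pt -> C) : Prop :=
  forall z, U z -> differentiable f z.

Definition dx (f : pt -> C) : pt -> C :=
  fun z => derive (fun t : C => f (t, z.2)) z.1 1.
Definition dy (f : pt -> C) : pt -> C :=
  fun z => derive (fun t : C => f (z.1, t)) z.2 1.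
Definition pderiv (a b : nat) (f : pt -> C) : pt -> C := iter a dx (iter b dy f).

Variable d : nat.

(* F(x,y,p) = sum_{i=0}^d a_i(x,y) p^{d-i} as a polynomial in p *)
Definition Fpoly (a : nat -> pt -> C) (z : pt) : {poly C} :=
  \poly_(k < d.+1) a (d - k)%N z.
Definition Fx (a : nat -> pt -> C) (z : pt) : {poly C} :=
  \poly_(k < d.+1) dx (a (d - k)%N) z.
Definition Fy (a : nat -> pt -> C) (z : pt) : {poly C} :=
  \poly_(k < d.+1) dy (a (d - k)%N) z.
Definition Fp a z : {poly C} := (Fpoly a z)^`().
Definition KF a z : {poly C} := Fx a z + 'X * Fy a z.
Definition Hpoly a z : {poly C} := KF a z * (Fpoly a z)^`(2) - (KF a z)^`() * Fp a z.
Definition Lpoly a z : {poly C} := KF a z * Fp a z.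

Definition multmx (P : {poly C}) (r c : nat) : 'M[C]_(r, c) :=
  \matrix_(i < r, j < c) (if (j <= i)%N then P`_(i - j) else 0).

Definition rowblock (r c : nat) (X : 'M[C]_(r, c)) (off n : nat) : 'M[C]_(n, c) :=
  \matrix_(i < n, j < c) oapp (fun k : 'I_r => X k j) 0 (insub (off + i)%N).
Definition topmx (c : nat) (X : 'M[C]_(3 * d - 3, c)) : 'M[C]_(d, c) := rowblock X 0 d.
Definition botmx (c : nat) (X : 'M[C]_(3 * d - 3, c)) : 'M[C]_(2 * d - 3, c) :=
  rowblock X d (2 * d - 3).

Definition MF a z : 'M[C]_(3 * d - 3, 2 * d - 3) := multmx (Fpoly a z) _ _.
Definition MFp2 a z : 'M[C]_(3 * d - 3, d - 1) := multmx (Fp a z ^+ 2) _ _.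
Definition ML a z : 'M[C]_(3 * d - 3, d - 2) := multmx (Lpoly a z) _ _.
Definition MH a z : 'M[C]_(3 * d - 3, d - 2) := multmx (Hpoly a z) _ _.

(* N : only nonzero entries N_{j,j+1} = j (1-based), i.e. N_{i,i+1} = i+1 (0-based) *)
Definition Nmx : 'M[C]_(d - 2) :=
  \matrix_(i, j) (if (j : nat) == i.+1 then (i.+1)%:R else 0).

Definition Bmx a z : 'M[C]_(d, d - 1) :=
  topmx (MFp2 a z) - topmx (MF a z) *m invmx (botmx (MF a z)) *m botmx (MFp2 a z).
Definition Emx a z : 'M[C]_(d, d - 2) :=
  (topmx (MH a z) - topmx (ML a z) *m Nmx)
  - topmx (MF a z) *m invmx (botmx (MF a z)) *m (botmx (MH a z) - botmx (ML a z) *m Nmx).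
Definition Mmx a (T : pt -> 'M[C]_(d - 1, d)) z : 'M[C]_(d - 1, d - 2) :=
  - (T z *m Emx a z).
Definition Mder a T (al be : nat) (z : pt) : 'M[C]_(d - 1, d - 2) :=
  \matrix_(i, j) pderiv al be (fun w => Mmx a T w i j) z.

Definition I0low : 'M[C]_(d - 1, d - 2) := \matrix_(i, j) ((i : nat) == j)%:R.
Definition I0up : 'M[C]_(d - 1, d - 2) := \matrix_(i, j) ((i : nat) == j.+1)%:R.
Definition J0 : 'M[C]_(d - 2, d - 1) := \matrix_(i, j) ((j : nat) == i.+1)%:R.
Definition Kmx : 'M[C]_(d - 2) := J0 *m I0low.

Definition bracket a T (m : pt) (u : nat -> nat -> 'cV[C]_(d - 2)) (al be : nat)
  : 'cV[C]_(d - 1) :=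
  \sum_(g < al.+1) \sum_(e < be.+1)
     ('C(al, g) * 'C(be, e))%:R *: (Mder a T (al - g) (be - e) m *m u g e).

(* u = (u_{alpha,beta})_{alpha+beta <= h} is in the fiber of R_h at m
   (u is given as a total function; only alpha+beta <= h matters) *)
Definition in_Rh a T (h : nat) (m : pt) (u : nat -> nat -> 'cV[C]_(d - 2)) : Prop :=
  forall al be : nat, (al + be < h)%N ->
    I0low *m u al.+1 be + I0up *m u al be.+1 = bracket a T m u al be.

Definition setup (U : set pt) (a : nat -> pt -> C) (p : 'I_d -> pt -> C)
  (T : pt -> 'M[C]_(d - 1, d)) : Prop :=
  open U /\
  (forall i, (i <= d)%N -> holomorphic_on U (a i)) /\
  (forall z, U z -> a 0%N z = 1) /\
  (forall i, holomorphic_on U (p i)) /\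
  (forall z, U z -> Fpoly a z = \prod_(i < d) ('X - (p i z)%:P)) /\
  (forall z i j, U z -> i != j -> p i z != p j z) /\
  (forall i j, holomorphic_on U (fun z => T z i j)) /\
  (forall z, U z -> T z *m Bmx a z = 1%:M).

End Setup.

(* Main.v *)
Require Import Defs.
From mathcomp Require Import all_boot all_order all_algebra.
From mathcomp Require Import all_classical all_reals all_analysis.
From mathcomp Require Import complex.
From mathcomp Require Import zify.
Import Order.TTheory GRing.Theory Num.Theory.
Import numFieldNormedType.Exports.
Local Open Scope ring_scope.
Local Open Scope complex_scope.

Section L.
Variable R : realType.
Variable d : nat.
Hypothesis d3 : (3 <= d)%N.

Lemma J0I0up : J0 R d *m I0up R d = 1%:M.
Proof.
apply/matrixP => i j; rewrite !mxE.
have Hi : (i.+1 < d - 1)%N by have := ltn_ord i; lia.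
rewrite (bigD1 (Ordinal Hi)) //= big1 ?addr0.
  rewrite !mxE /= eqxx mul1r eqSS.
  by [].
move=> l /eqP nl; rewrite !mxE.
case: (l =P i.+1 :> nat) => [e|]; last by rewrite mul0r.
by exfalso; apply: nl; apply: val_inj.
Qed.

Lemma J0rel (x y : 'cV[Cplx R]_(d - 2)) :
  J0 R d *m (I0low R d *m x + I0up R d *m y) = Kmx R d *m x + y.
Proof. by rewrite mulmxDr !mulmxA J0I0up mul1mx. Qed.

Lemma Kpow0 k (w : 'cV[Cplx R]_(d - 2)) (i : 'I_(d-2)) :
  (d - 2 <= i + k)%N -> (Kmx R d ^+ k *m w) i 0 = 0.
Proof.
elim: k i => [|k IH] i Hik.
  by have := ltn_ord i; lia.
rewrite exprS -mulmxE -mulmxA.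
move: (Kmx R d ^+ k *m w) IH => v IH.
rewrite /Kmx -mulmxA mxE big1 // => l _.
rewrite !mxE.
case: (l =P i.+1 :> nat) => [e|]; last by rewrite mul0r.
rewrite big1 ?mulr0 // => j _; rewrite !mxE.
case: (l =P j :> nat) => [e'|]; last by rewrite mul0r.
rewrite IH ?mulr0 //; lia.
Qed.

Lemma I0low_inj (w : 'cV[Cplx R]_(d - 2)) : I0low R d *m w = 0 -> w = 0.
Proof.
move=> H; apply/matrixP => j c; rewrite (ord1 c).
have Hj : (j < d - 1)%N by have := ltn_ord j; lia.
have := congr1 (fun M : 'M[Cplx R]_(d-1,1) => M (Ordinal Hj) 0) H; rewrite !mxE => <-.
rewrite (bigD1 j) //= big1 ?addr0; first by rewrite !mxE eqxx mul1r.
move=> l nl; rewrite !mxE /=.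
case: (j =P l :> nat) => [e|]; last by rewrite mul0r.
by exfalso; move/eqP: nl; apply; apply: val_inj.
Qed.


Variables (a : nat -> C2pt R -> Cplx R) (T : C2pt R -> 'M[Cplx R]_(d - 1, d)) (m : C2pt R).

Lemma bracket_ext (u u' : nat -> nat -> 'cV[Cplx R]_(d - 2)) al be :
  (forall g e, (g <= al)%N -> (e <= be)%N -> u g e = u' g e) ->
  bracket a T m u al be = bracket a T m u' al be.
Proof.
move=> H; apply: eq_bigr => g _; apply: eq_bigr => e _.
by rewrite H // -ltnS.
Qed.

Lemma Rel h u al be : in_Rh a T h m u -> (al + be < h)%N ->
  u al be.+1 = J0 R d *m bracket a T m u al be - Kmx R d *m u al.+1 be.
Proof.
move=> Hu Hab; have := congr1 (mulmx (J0 R d)) (Hu al be Hab).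
rewrite J0rel => <-.
move: (Kmx R d *m u al.+1 be) (u al be.+1) => x y.
by rewrite addrAC subrr add0r.
Qed.

Lemma formula h u k : in_Rh a T h m u -> (k <= h)%N -> forall j, (j <= k)%N ->
  u 0%N k = \sum_(i < j) (-1) ^+ i *:
                 (Kmx R d ^+ i *m (J0 R d *m bracket a T m u i (k - 1 - i)))
            + (-1) ^+ j *: (Kmx R d ^+ j *m u j (k - j)%N).
Proof.
move=> Hu Hk; elim=> [|j IH] Hj.
  by rewrite big_ord0 add0r expr0 scale1r mul1mx subn0.
rewrite {1}IH; last exact: ltnW.
rewrite big_ord_recr /= -addrA; congr (_ + _).
have -> : (k - j = (k - j.+1).+1)%N by lia.
rewrite (Rel _ _ _ _ Hu); last by lia.
have -> : (k - 1 - j = k - j.+1)%N by lia.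
move: (J0 R d *m _) (u j.+1 (k - j.+1)%N) => x y.
rewrite mulmxBr scalerBr; congr (_ + _).
by rewrite exprS mulN1r scaleNr exprSr -mulmxE mulmxA.
Qed.

End L.

Lemma entry_eq (R : realType) n (X X' Y Y' : 'cV[Cplx R]_n) (c : Cplx R) j :
  X j 0 = X' j 0 -> Y j 0 = 0 -> Y' j 0 = 0 ->
  (X + c *: Y) j 0 = (X' + c *: Y') j 0.
Proof. by move=> H1 H2 H3; rewrite !mxE H1 H2 H3. Qed.

Theorem theorem3 (R : realType) (d : nat) (U : set (C2pt R))
  (a : nat -> C2pt R -> Cplx R) (p : 'I_d -> C2pt R -> Cplx R)
  (T : C2pt R -> 'M[Cplx R]_(d - 1, d))
  (h : nat) (m : C2pt R) (u : nat -> nat -> 'cV[Cplx R]_(d - 2)) :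
  (3 <= d)%N ->
  setup U a p T ->
  (1 <= h)%N -> (h <= d - 3)%N ->
  U m ->
  in_Rh a T h m u ->
  (* v^(h) = (-1)^h K^h u_{h,0} + sum_{k<h} (-1)^k K^k (_0 J) <M,u>_{k,h-1-k} *)
  u 0%N h = (-1) ^+ h *: (Kmx R d ^+ h *m u h 0%N)
            + \sum_(k < h) (-1) ^+ k *:
                 (Kmx R d ^+ k *m (J0 R d *m bracket a T m u k (h - 1 - k)))
  /\
  (* v^(h) is determined by the truncations ~v^(k), k <= h, among elements of R_h at m *)
  (forall u' : nat -> nat -> 'cV[Cplx R]_(d - 2),
     in_Rh a T h m u' ->
     (forall (k : nat) (j : 'I_(d - 2)), (k <= h)%N -> (j <= d - 3 - k)%N ->
        u' 0%N k j 0 = u 0%N k j 0) ->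
     u' 0%N h = u 0%N h).
Proof.
move=> d3 _ h1 hd Um Hu; split.
  by rewrite (@formula R d d3 a T m h u h Hu (leqnn h) h (leqnn h)) subnn addrC.
move=> u' Hu' Htr.
have step : forall s, (s <= h)%N ->
    (forall g e, (g + e < s)%N -> u' g e = u g e) ->
    forall g, (g <= s)%N -> u' g (s - g)%N = u g (s - g)%N.
  move=> s Hs IHs.
  have v0 : u' 0%N s = u 0%N s.
    apply/matrixP => j c; rewrite (ord1 c).
    case: (leqP j (d - 3 - s)) => Hj; first exact: Htr.
    rewrite (@formula R d d3 a T m h u' s Hu' Hs s (leqnn s)).
    rewrite (@formula R d d3 a T m h u s Hu Hs s (leqnn s)) (subnn s).
    have Hjs : (d - 2 <= j + s)%N by have := ltn_ord j; lia.
    apply: entry_eq.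
      apply: (congr1 (fun M : 'cV[Cplx R]_(d-2) => M j 0)).
    apply: eq_bigr => i _; congr (_ *: (_ *m (_ *m _))).
    apply: bracket_ext => g e Hg He; apply: IHs.
    have := ltn_ord i; lia.
    - exact: (@Kpow0 R d d3 s (u' s 0%N) j Hjs).
    - exact: (@Kpow0 R d d3 s (u s 0%N) j Hjs).
  elim=> [|g IHg] Hg; first by rewrite subn0.
  have Hs1 : (g + (s - g.+1) < h)%N by lia.
  have E1 := Hu g (s - g.+1)%N Hs1.
  have E2 := Hu' g (s - g.+1)%N Hs1.
  have Es : ((s - g.+1).+1 = s - g)%N by lia.
  rewrite Es in E1 E2.
  rewrite IHg ?(ltnW Hg) // in E2.
  rewrite (@bracket_ext R d a T m u' u) in E2; last first.
    move=> g0 e0 Hg0 He0; apply: IHs; lia.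
  apply/eqP; rewrite -subr_eq0; apply/eqP; apply: (@I0low_inj R d d3).
  rewrite mulmxBr; apply/eqP; rewrite subr_eq0; apply/eqP.
  by apply: (@addIr _ (I0up R d *m u g (s - g)%N)); rewrite E1 E2.
have Q : forall s, (s <= h)%N -> forall g e, (g + e <= s)%N -> u' g e = u g e.
  elim=> [|s IH] Hs g e Hge.
    have -> : g = 0%N by lia.
    have -> : e = 0%N by lia.
    by have := step 0%N Hs (fun g e H => False_ind _ (notF H)) 0%N (leqnn 0); rewrite subn0.
  case: (ltnP (g + e) s.+1) => H; first by apply: IH => //; lia.
  have -> : e = (s.+1 - g)%N by lia.
  apply: step => //; last by lia.
  move=> g0 e0 H0; apply: IH; lia.
by apply: (Q h (leqnn h)).
Qed.
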